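(* Let $(X,\mu),(Y,\nu)$ be $\sigma$-finite measure spaces and $\varphi\colon\mathcal B(X,\mu)\to\mathcal B(Y,\nu)$ a conformal homomorphism. Then for every $k\in\mathbb N$ and $\varepsilon>0$ there is $\delta>0$ such that for every family $A_1,\dots,A_k$ of measurable subsets of $X$ with $\mu(A_i)\le\delta$ there exists $\lambda>0$ with $|\mu(A_i\cap A_j)-\lambda\nu(\varphi(A_i)\cap\varphi(A_j))|\le\varepsilon\max_{l=1,\dots,k}\mu(A_l)$ for all $i,j=1,\dots,k$.
   Context: A map $\varphi\colon\mathcal B(X,\mu)\to\mathcal B(Y,\nu)$ between measurable sets is a conformal homomorphism if for every $\varepsilon>0$ there is $\delta>0$ such that for all measurable $U,V\subset X$ with $\mu(U),\mu(V)\le\delta$ there is $\lambda>0$ with $|\mu(U)-\lambda\nu(\varphi U)|,\ |\mu(V)-\lambda\nu(\varphi V)|,\ |\mu(U\cap V)-\lambda\nu(\varphi U\cap\varphi V)|$ all at most $\varepsilon\max\{\mu(U),\mu(V)\}$. *)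

(* Defs.v *)
From HB Require Import structures.
From mathcomp Require Import all_boot all_order all_algebra.
From mathcomp Require Import all_classical all_reals all_analysis.
Set Implicit Arguments. Unset Strict Implicit. Unset Printing Implicit Defensive.
Import Order.TTheory GRing.Theory Num.Theory.
Local Open Scope classical_set_scope.
Local Open Scope ring_scope.
Local Open Scope ereal_scope.

(* A map phi : B(X,mu) -> B(Y,nu) between measure algebras, represented by a
   map on measurable sets sending measurable sets to measurable sets and
   respecting equality modulo null sets. *)
Definition measure_algebra_map (R : realType) (d1 d2 : measure_display)
  (X : measurableType d1) (Y : measurableType d2)
  (mu : {measure set X -> \bar R}) (nu : {measure set Y -> \bar R})
  (phi : set X -> set Y) : Prop :=
  (forall U, measurable U -> measurable (phi U)) /\
  (forall U V, measurable U -> measurable V ->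
     mu (U `\` V) = 0 -> mu (V `\` U) = 0 ->
     nu (phi U `\` phi V) = 0 /\ nu (phi V `\` phi U) = 0).

Definition conformal_hom (R : realType) (d1 d2 : measure_display)
  (X : measurableType d1) (Y : measurableType d2)
  (mu : {measure set X -> \bar R}) (nu : {measure set Y -> \bar R})
  (phi : set X -> set Y) : Prop :=
  forall eps : R, (0 < eps)%R -> exists2 delta : R, (0 < delta)%R &
    forall U V, measurable U -> measurable V ->
      mu U <= delta%:E -> mu V <= delta%:E ->
      exists2 lam : R, (0 < lam)%R &
        [/\ `| mu U - lam%:E * nu (phi U) | <= eps%:E * maxe (mu U) (mu V),
            `| mu V - lam%:E * nu (phi V) | <= eps%:E * maxe (mu U) (mu V) &
            `| mu (U `&` V) - lam%:E * nu (phi U `&` phi V) |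
               <= eps%:E * maxe (mu U) (mu V)].

(* Main.v *)
Require Import Defs.
From HB Require Import structures.
From mathcomp Require Import all_boot all_order all_algebra.
From mathcomp Require Import all_classical all_reals all_analysis.
From mathcomp Require Import ring lra.
Import Order.TTheory GRing.Theory Num.Theory.
Local Open Scope classical_set_scope.
Local Open Scope ring_scope.
Local Open Scope ereal_scope.

Local Open Scope ring_scope.

Lemma core (R : realType) (e a c M lam lam' lim ni nc nm : R) :
  0 < e -> e <= 1/2 -> 0 <= c -> c <= a -> a <= M -> 0 <= a ->
  0 < lam -> 0 < lam' -> 0 < lim -> 0 <= ni -> 0 <= nc -> 0 <= nm ->
  `|a - lam' * ni| <= e * a -> `|c - lam' * nc| <= e * a ->
  `|a - lim * ni| <= e * M -> `|M - lim * nm| <= e * M ->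
  `|M - lam * nm| <= e * M ->
  `|c - lam * nc| <= 25 * e * M.
Proof.
move=> e0 e1 c0 ca aM a0 l0 l'0 li0 ni0 nc0 nm0.
have [apos|] := boolP (0 < a); last first.
  move=> an _ Hc _ _ _.
  have a00 : a = 0 by apply/eqP; rewrite eq_le a0 andbT leNgt.
  have c00 : c = 0 by lra.
  rewrite a00 c00 mulr0 sub0r normrN in Hc.
  have : lam' * nc = 0 by apply/eqP; rewrite -normr_le0.
  move/eqP; rewrite mulf_eq0 (gt_eqF l'0) /= => /eqP ->.
  rewrite c00 mulr0 subr0 normr0; apply: mulr_ge0 => //; lra.
clear a0; rename apos into a0.
move=> /ler_normlP [H1 H1'] /ler_normlP [H2 H2'] /ler_normlP [H3 H3']
  /ler_normlP [H4 H4'] /ler_normlP [H5 H5'].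
have s0 : 0 <= lim * ni by apply: mulr_ge0; lra.
have p0 : 0 <= lam' * nc by apply: mulr_ge0; lra.
have q0 : 0 <= lam * ni by apply: mulr_ge0; lra.
have quv : (lam * ni) * (lim * nm) = (lim * ni) * (lam * nm) by ring.
have xr : (lam * nc) * (lam' * ni) = (lam' * nc) * (lam * ni) by ring.
move: quv xr s0 p0 q0 H1 H1' H2 H2' H3 H3' H4 H4' H5 H5'.
set q := lam * ni; set s := lim * ni; set u := lim * nm; set v := lam * nm.
set r := lam' * ni; set p := lam' * nc; set x := lam * nc.
move=> quv xr s0 p0 q0 H1 H1' H2 H2' H3 H3' H4 H4' H5 H5'.
have M0 : 0 < M by lra.
have eM : e * M <= 1/2 * M by apply: ler_wpM2r; lra.
have eA : e * a <= 1/2 * a by apply: ler_wpM2r; lra.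
have u2 : M / 2 <= u by lra.
have E1 : (q - a) * u = s * (v - M) + (s - a) * M + a * (M - u) by lra.
have B1 : s * (v - M) <= s * (e * M) by apply: ler_wpM2l => //; lra.
have B1' : s * (- (e * M)) <= s * (v - M) by apply: ler_wpM2l => //; lra.
have B2 : (s - a) * M <= (e * M) * M by apply: ler_wpM2r; lra.
have B2' : (- (e * M)) * M <= (s - a) * M by apply: ler_wpM2r; lra.
have B3 : a * (M - u) <= a * (e * M) by apply: ler_wpM2l; lra.
have B3' : a * (- (e * M)) <= a * (M - u) by apply: ler_wpM2l; lra.
have sle : s <= 3/2 * M by lra.
have K1 : s * (e * M) <= (3/2 * M) * (e * M) by apply: ler_wpM2r => //; nra.
have K2 : a * (e * M) <= M * (e * M) by apply: ler_wpM2r => //; nra.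
have hqa : `|q - a| <= 7 * e * M.
  apply/ler_normlP; split.
  - have : (a - q) * u <= 7/2 * e * M * M by lra.
    move=> h. nra.
  - have : (q - a) * u <= 7/2 * e * M * M by lra.
    move=> h. nra.
move/ler_normlP: hqa => [Q1 Q2].
have r2 : a / 2 <= r by lra.
have E2 : (x - c) * r = p * (q - a) + (p - c) * a + c * (a - r) by lra.
have C1 : p * (q - a) <= p * (7 * e * M) by apply: ler_wpM2l => //; lra.
have C1' : p * (- (7 * e * M)) <= p * (q - a) by apply: ler_wpM2l => //; lra.
have C2 : (p - c) * a <= (e * a) * a by apply: ler_wpM2r; lra.
have C2' : (- (e * a)) * a <= (p - c) * a by apply: ler_wpM2r; lra.
have C3 : c * (a - r) <= c * (e * a) by apply: ler_wpM2l; lra.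
have C3' : c * (- (e * a)) <= c * (a - r) by apply: ler_wpM2l; lra.
have ple : p <= 3/2 * a by lra.
have eM0 : 0 <= e * M by nra.
have L1 : p * (7 * e * M) <= (3/2 * a) * (7 * e * M) by apply: ler_wpM2r => //; nra.
have L2 : (e * a) * a <= (e * a) * M by apply: ler_wpM2l => //; nra.
have L3 : c * (e * a) <= a * (e * a) by apply: ler_wpM2r => //; nra.
apply/ler_normlP; split.
- have : (c - x) * r <= 25/2 * e * a * M by nra.
  move=> h. nra.
- have : (x - c) * r <= 25/2 * e * a * M by nra.
  move=> h. nra.
Qed.


Lemma conv (R : realType) (x lam z : R) (y : \bar R) : (0 < lam)%R -> (0 <= y)%E ->
  (`|x%:E - lam%:E * y| <= z%:E)%E -> y = (fine y)%:E /\ `|x - lam * fine y| <= z.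
Proof.
move=> l0; case: y => [r| |] //= _.
by rewrite mulry gtr0_sg // mul1e /= leye_eq.
Qed.

Arguments conv {R x lam z y}.
Arguments core {R e a c M lam lam' lim ni nc nm}.
Local Open Scope ereal_scope.

Theorem lemma4p3 (R : realType) (d1 d2 : measure_display)
  (X : measurableType d1) (Y : measurableType d2)
  (mu : {measure set X -> \bar R}) (nu : {measure set Y -> \bar R})
  (phi : set X -> set Y) :
  sigma_finite setT mu -> sigma_finite setT nu ->
  measure_algebra_map mu nu phi ->
  conformal_hom mu nu phi ->
  forall (k : nat) (eps : R), (0 < eps)%R ->
  exists2 delta : R, (0 < delta)%R &
    forall A : 'I_k -> set X,
      (forall i, measurable (A i)) ->
      (forall i, mu (A i) <= delta%:E) ->
      exists2 lam : R, (0 < lam)%R &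
        forall i j : 'I_k,
          `| mu (A i `&` A j) - lam%:E * nu (phi (A i) `&` phi (A j)) |
            <= eps%:E * \big[maxe/0]_(l < k) mu (A l).
Proof.
move=> _ _ _ Hc k eps eps0.
pose e := Num.min (eps / 32)%R (1/2)%R.
have e0 : (0 < e)%R by rewrite /e lt_min; apply/andP; split; lra.
have e1 : (e <= 1/2)%R by rewrite /e ge_min lexx orbT.
have e2 : (25 * e <= eps)%R.
  have : (e <= eps / 32)%R by rewrite /e ge_min lexx.
  lra.
have [delta d0 Hd] := Hc e e0.
exists delta => // A mA Ad.
case: k A mA Ad => [|n] A mA Ad.
  by exists 1%R => // -[].
have fm : forall U, measurable U -> mu U <= delta%:E -> mu U = (fine (mu U))%:E.
  move=> U mU hU; rewrite fineK // ge0_fin_numE //.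
  by apply: (le_lt_trans hU); rewrite ltry.
pose m := [arg max_(i > (ord0 : 'I_n.+1)) mu (A i)]%O.
have Hmax : forall l, mu (A l) <= mu (A m).
  rewrite /m; case: arg_maxP => //= i _ H l; exact: H.
have -> : \big[maxe/0]_(l < n.+1) mu (A l) = mu (A m).
  by rewrite (bigmax_eq_arg _ ord0).
have [lam l0 [Hm1 _ _]] := Hd (A m) (A m) (mA m) (mA m) (Ad m) (Ad m).
exists lam => // i j.
wlog hji : i j / mu (A j) <= mu (A i).
  move=> H; case: (leP (mu (A j)) (mu (A i))) => h; first exact: H.
  rewrite setIC [phi (A i) `&` _]setIC; apply: H; exact: ltW.
have [lam' l'0 [Hi1 _ Hij]] := Hd (A i) (A j) (mA i) (mA j) (Ad i) (Ad j).
have [lim li0 [Hi2 Hm2 _]] := Hd (A i) (A m) (mA i) (mA m) (Ad i) (Ad m).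
have mI : measurable (A i `&` A j) by apply: measurableI.
have cai : mu (A i `&` A j) <= mu (A i) by apply: measureIl.
have HmaxI := Hmax i.
have aE := fm _ (mA i) (Ad i).
have bE := fm _ (mA j) (Ad j).
have ME := fm _ (mA m) (Ad m).
have cE := fm _ mI (le_trans cai (Ad i)).
have c0 : 0 <= mu (A i `&` A j) by [].
move: Hi1 Hij Hi2 Hm2 Hm1 hji cai HmaxI c0.
rewrite aE bE ME cE -!EFin_max -!EFinM !lee_fin.
rewrite (max_l (lexx _)).
move=> Hi1 Hij Hi2 Hm2 Hm1 hji cai HmaxI c0.
rewrite (max_l hji) in Hi1 Hij.
rewrite (max_r HmaxI) in Hi2 Hm2.
have [_ R1] := conv l'0 (measure_ge0 _ _) Hi1.
have [nE R2] := conv l'0 (measure_ge0 _ _) Hij.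
have [_ R3] := conv li0 (measure_ge0 _ _) Hi2.
have [_ R4] := conv li0 (measure_ge0 _ _) Hm2.
have [_ R5] := conv l0 (measure_ge0 _ _) Hm1.
rewrite nE -EFinM -EFinB abse_EFin lee_fin.
have a0 : (0 <= fine (mu (A i)))%R := le_trans c0 cai.
have M0 : (0 <= fine (mu (A m)))%R := le_trans a0 HmaxI.
apply: (le_trans (core e0 e1 c0 cai HmaxI a0 l0 l'0 li0
  (fine_ge0 (measure_ge0 _ _)) (fine_ge0 (measure_ge0 _ _))
  (fine_ge0 (measure_ge0 _ _)) R1 R2 R3 R4 R5)).
by apply: ler_wpM2r.
Qed.
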